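(* For every real $M\ge1$, $$\mathrm{supp}(F_M)\subseteq\{x\in\mathbb{R}^2:|qx-r|\le|q|^{-\tau}\text{ for some }(q,r)\in\mathbb{Z}^2(M)\times\mathbb{Z}^2\}.$$ Moreover, for any sequence $(M_k)_{k\ge1}$ of real numbers $M_k\ge1$ with $M_k\le M_{k+1}/2$ for all $k\in\mathbb{N}$, $$\bigcap_{k=1}^\infty\mathrm{supp}(F_{M_k})\subseteq E_\ast(\tau).$$
   Context: Identify $\mathbb{R}^2$ with $\mathbb{C}$ (products $qx$ are complex multiplication, $\mathbb{Z}^2$ is the Gaussian integers); $|x|=\max(|x_1|,|x_2|)$. Let $\tau\in\mathbb{R}$, $\tau\neq-1$, $a=2/(1+\tau)$, and fix a positive integer $K>2+a$. Fix a non-negative $C^K$ function $\phi$ on $\mathbb{R}^2$ with $\int\phi=1$ and $\mathrm{supp}(\phi)\subseteq[-1,1]^2$. For $\varepsilon>0$ let $\phi^\varepsilon(x)=\varepsilon^{-2}\phi(x/\varepsilon)$, $\Phi^\varepsilon(x)=\sum_{r\in\mathbb{Z}^2}\phi^\varepsilon(x-r)$, $\Phi^\varepsilon_q(x)=\Phi^\varepsilon(qx)$. For $M>0$ let $\mathbb{Z}^2(M)=\{q\in\mathbb{Z}^2:M/2<|q|\le M\}$, $\varepsilon(M)=\tfrac12M^{-\tau}$, and $F_M=\frac{1}{|\mathbb{Z}^2(M)|}\sum_{q\in\mathbb{Z}^2(M)}\Phi^{\varepsilon(M)}_q$. Define $$E_\ast(\tau)=\{x\in\mathbb{R}^2:|qx-r|\le|q|^{-\tau}\text{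 for infinitely many }(q,r)\in\mathbb{Z}^2\times\mathbb{Z}^2,\ q\neq0\}.$$ *)

(* Defs.v *)
From HB Require Import structures.
From mathcomp Require Import all_boot all_order all_algebra.
From mathcomp Require Import all_classical all_reals all_analysis.
Set Implicit Arguments. Unset Strict Implicit. Unset Printing Implicit Defensive.
Import Order.TTheory GRing.Theory Num.Theory.
Import numFieldNormedType.Exports.
Local Open Scope classical_set_scope.
Local Open Scope ring_scope.

Section Defs.
Variable R : realType.

(* R^2 identified with C: points are pairs (x1, x2) = x1 + i x2 *)
Definition pt := (R * R)%type.
Definition gauss := (int * int)%type.

Definition gR (q : gauss) : pt := (q.1%:~R, q.2%:~R).

(* complex multiplication q x *)
Definition cmul (q : gauss) (x : pt) : pt :=
  (q.1%:~R * x.1 - q.2%:~R * x.2, q.1%:~R * x.2 + q.2%:~R * x.1).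

Definition nrm (x : pt) : R := Num.max `|x.1| `|x.2|.
Definition gnrm (q : gauss) : R := nrm (gR q).

Definition psub (x y : pt) : pt := (x.1 - y.1, x.2 - y.2).

Definition suppR (f : pt -> R) : set pt := closure [set x | f x <> 0].
Definition suppE (f : pt -> \bar R) : set pt := closure [set x | f x <> 0%E].

Definition edir (b : bool) : pt := if b then (1, 0) else (0, 1).
Fixpoint ipartial (s : seq bool) (f : pt -> R) : pt -> R :=
  match s with
  | [::] => f
  | b :: s' => 'D_(edir b) (ipartial s' f)
  end.

Definition CK (K : nat) (f : pt -> R) : Prop :=
  forall s : seq bool, (size s <= K)%N ->
    continuous (ipartial s f) /\
    ((size s < K)%N -> forall (b : bool) (x : pt), derivable (ipartial s f) x (edir b)).

Definition phieps (phi : pt -> R) (eps : R) (x : pt) : R :=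
  eps ^-2 * phi (x.1 / eps, x.2 / eps).

Definition Phieps (phi : pt -> R) (eps : R) (x : pt) : \bar R :=
  (\esum_(r in [set: gauss]) (phieps phi eps (psub x (gR r)))%:E)%E.

(* Z^2(M) = {q : M/2 < |q| <= M}, enumerated inside the box |q_i| <= floor M *)
Definition boxZ (M : R) : seq int :=
  [seq (i%:Z - (Num.truncn M)%:Z)%R | i <- iota 0 ((Num.truncn M).*2.+1)].
Definition Z2 (M : R) : seq gauss :=
  [seq q <- [seq (a, b) | a <- boxZ M, b <- boxZ M] | (M / 2 < gnrm q) && (gnrm q <= M)].
Definition Z2set (M : R) : set gauss := [set q | M / 2 < gnrm q /\ gnrm q <= M].

Definition epsM (tau M : R) : R := 2^-1 * M `^ (- tau).

Definition FM (phi : pt -> R) (tau M : R) (x : pt) : \bar R :=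
  (((size (Z2 M))%:R^-1)%:E * \sum_(q <- Z2 M) Phieps phi (epsM tau M) (cmul q x))%E.

Definition approxM (tau M : R) : set pt :=
  [set x | exists (q r : gauss), Z2set M q /\
             nrm (psub (cmul q x) (gR r)) <= gnrm q `^ (- tau)].

Definition Estar (tau : R) : set pt :=
  [set x | ~ finite_set [set qr : gauss * gauss | qr.1 != 0 /\
             nrm (psub (cmul qr.1 x) (gR qr.2)) <= gnrm qr.1 `^ (- tau)]].

End Defs.

(* Main.v *)
Require Import Defs.
From HB Require Import structures.
From mathcomp Require Import all_boot all_order all_algebra.
From mathcomp Require Import all_classical all_reals all_analysis.
From mathcomp Require Import ring lra.
Import Order.TTheory GRing.Theory Num.Theory.
Import numFieldNormedType.Exports.
Local Open Scope classical_set_scope.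
Local Open Scope ring_scope.

Section Helpers.
Variable R : realType.

Lemma gnrm_ge (q : gauss) :
  `|(q.1%:~R : R)| <= gnrm R q /\ `|(q.2%:~R : R)| <= gnrm R q.
Proof. by rewrite /gnrm /nrm /gR /= !le_max !lexx orbT. Qed.

Lemma nrm_le (v : pt R) c : `|v.1| <= c -> `|v.2| <= c -> nrm v <= c.
Proof. by move=> h1 h2; rewrite /nrm ge_max h1 h2. Qed.

Lemma mulbound (c e g d : R) : `|c| <= g -> `|e| < d -> `|c * e| <= g * d.
Proof.
move=> hc he; rewrite normrM; apply: ler_pM => //; last exact: ltW.
Qed.

Lemma sum3bound (a b1 b2 E g d : R) : `|a| <= E -> `|b1| <= g * d -> `|b2| <= g * d ->
  `|a + b1 + b2| <= E + 2 * (g * d).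
Proof.
move=> ha h1 h2; apply: (le_trans (ler_normD _ _)).
apply: (le_trans (lerD (ler_normD _ _) (lexx _))).
lra.
Qed.

Lemma FM_nz (phi : pt R -> R) tau M y : FM phi tau M y <> 0%E ->
  exists (q r : gauss), q \in Z2 M /\
    phi ((psub (cmul q y) (gR R r)).1 / epsM tau M,
         (psub (cmul q y) (gR R r)).2 / epsM tau M) <> 0.
Proof.
move=> hF; apply: contrapT => hn; apply: hF.
rewrite /FM big1_seq ?mule0 // => q /andP[_ hq].
rewrite /Phieps esum1 // => r _.
case: (pselect (phi ((psub (cmul q y) (gR R r)).1 / epsM tau M,
         (psub (cmul q y) (gR R r)).2 / epsM tau M) = 0)) => h.
  by rewrite /phieps h mulr0.
by exfalso; apply: hn; exists q, r.
Qed.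


Lemma part1_nonpos (tau M : R) (x : pt R) : tau <= 0 -> 1 <= M -> approxM tau M x.
Proof.
move=> ht hM.
set f := Num.floor M.
have hf : (f%:~R : R) <= M < (f + 1)%:~R by exact: floor_itv.
have f1 : (1 : R) <= f%:~R.
  have : (1 <= f)%R by rewrite /f floor_ge_int.
  by rewrite -(ler_int R).
pose q : gauss := (f, 0).
pose v := cmul q x.
exists q, (Num.floor v.1, Num.floor v.2).
have gq : gnrm R q = f%:~R.
  rewrite /gnrm /nrm /gR /= normr0 ger0_norm; last by apply: le_trans f1.
  by apply/max_idPl; apply: le_trans f1.
split.
  rewrite /Z2set /= gq; move/andP: hf => [h1 h2]; split => //.
  rewrite intrD rmorph1 in h2; lra.
apply: (@le_trans _ _ 1).
  have fl : forall t : R, `|t - (Num.floor t)%:~R| <= 1.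
    move=> t; have := floor_itv t; move=> /andP[a b]; rewrite intrD rmorph1 in b.
    rewrite ger0_norm; lra.
  by apply: nrm_le; rewrite /psub /gR /=; apply: fl.
rewrite gq.
have := @ge0_ler_powR R (- tau) _ 1 (f%:~R); rewrite powR1 /=; apply.
- lra.
- by rewrite nnegrE.
- by rewrite nnegrE; lra.
- exact: f1.
Qed.


Lemma part1_pos (phi : pt R -> R) (tau M : R) : 0 < tau -> 1 <= M ->
  suppR phi `<=` [set x | `|x.1| <= 1 /\ `|x.2| <= 1] ->
  suppE (FM phi tau M) `<=` approxM tau M.
Proof.
move=> ht hM hs x hx.
have Mpos : 0 < M by lra.
set P := M `^ (- tau).
have PM : 0 < P := powR_gt0 _ Mpos.
set eps := epsM tau M.
have epsdef : eps = P / 2 by rewrite /eps /epsM mulrC.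
have eps0 : 0 < eps by rewrite epsdef; lra.
pose d := eps / (2 * M).
have d0 : 0 < d by rewrite /d divr_gt0 // mulr_gt0.
have Md : M * d = eps / 2 by rewrite /d; field; lra.
have [y [Fy bxy]] := hx _ (nbhsx_ballx x d d0).
move: bxy; rewrite /ball /= => -[]; rewrite /ball /= => b1 b2.
have [q [r [hq hphi]]] := @FM_nz phi tau M y Fy.
rewrite mem_filter in hq; case/andP: hq => /andP[h1 h2] _.
have [g1 g2] := gnrm_ge q.
have gpos : 0 < gnrm R q by lra.
have hz := hs _ (subset_closure hphi); move: hz => /= [z1 z2].
rewrite normrM normfV (gtr0_norm eps0) ler_pdivrMr // mul1r in z1.
rewrite normrM normfV (gtr0_norm eps0) ler_pdivrMr // mul1r in z2.
exists q, r; split => //.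
have key : P <= gnrm R q `^ (- tau).
  rewrite /P !powRN lef_pV2 ?posrE ?powR_gt0 //.
  apply: ge0_ler_powR => //; [exact: ltW | by rewrite nnegrE; lra | by rewrite nnegrE; lra].
have gd : gnrm R q * d <= M * d by apply: ler_wpM2r => //; exact: ltW.
apply: (@le_trans _ _ (eps + 2 * (gnrm R q * d))); last by lra.
apply: nrm_le.
- have -> : (psub (cmul q x) (gR R r)).1 = (psub (cmul q y) (gR R r)).1
     + q.1%:~R * (x.1 - y.1) + (- q.2%:~R) * (x.2 - y.2).
    by rewrite /psub /cmul /=; ring.
  apply: sum3bound => //; apply: mulbound => //; by rewrite ?normrN.
- have -> : (psub (cmul q x) (gR R r)).2 = (psub (cmul q y) (gR R r)).2
     + q.1%:~R * (x.2 - y.2) + q.2%:~R * (x.1 - y.1).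
    by rewrite /psub /cmul /=; ring.
  by apply: sum3bound => //; apply: mulbound.
Qed.


Lemma part1 (phi : pt R -> R) (tau M : R) : 1 <= M ->
  suppR phi `<=` [set x | `|x.1| <= 1 /\ `|x.2| <= 1] ->
  suppE (FM phi tau M) `<=` approxM tau M.
Proof.
move=> hM hs x hx; case: (leP tau 0) => ht.
  exact: part1_nonpos.
exact: (@part1_pos phi tau M ht hM hs).
Qed.

Lemma gnrm0 : gnrm R 0 = 0.
Proof. by rewrite /gnrm /nrm /gR /= normr0 maxxx. Qed.

End Helpers.

Theorem lemma4 (R : realType) (tau : R) (K : nat) (phi : pt R -> R)
  (htau : tau != -1)
  (hK0 : (0 < K)%N)
  (hK : 2 + 2 / (1 + tau) < K%:R)
  (hphi0 : forall x, 0 <= phi x)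
  (hphiK : CK K phi)
  (hphiint : (\int[(@lebesgue_measure R \x @lebesgue_measure R)%E]_x (phi x)%:E = 1)%E)
  (hphisupp : suppR phi `<=` [set x | `|x.1| <= 1 /\ `|x.2| <= 1]) :
  (forall M : R, 1 <= M -> suppE (FM phi tau M) `<=` approxM tau M) /\
  (forall Mk : nat -> R, (forall k, 1 <= Mk k) -> (forall k, Mk k <= Mk k.+1 / 2) ->
     \bigcap_k suppE (FM phi tau (Mk k)) `<=` Estar tau).
Proof.
split.
  move=> M hM; exact: part1.
move=> Mk hM1 hMk x hx.
have ax : forall k, exists qr : (gauss * gauss)%type, Z2set (Mk k) qr.1 /\
    nrm (psub (cmul qr.1 x) (gR R qr.2)) <= gnrm R qr.1 `^ (- tau).
  move=> k; have [q [r [h1 h2]]] := @part1 R phi tau (Mk k) (hM1 k) hphisupp x (hx k I).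
  by exists (q, r).
pose f k := projT1 (cid (ax k)).
have hf : forall k, Z2set (Mk k) (f k).1 /\
    nrm (psub (cmul (f k).1 x) (gR R (f k).2)) <= gnrm R (f k).1 `^ (- tau).
  by move=> k; rewrite /f; case: (cid (ax k)).
have mono : forall k l, (k < l)%N -> Mk k <= Mk l / 2.
  move=> k; elim=> // l IH; rewrite ltnS leq_eqVlt => /orP [/eqP -> | /IH h].
    exact: hMk.
  have := hMk l; have := hM1 l; lra.
have finj : injective f.
  move=> k l hkl; case: (ltngtP k l) => // h; exfalso.
  - have := mono _ _ h; have := hf k; have := hf l; rewrite hkl.
    rewrite /Z2set /= => -[[? ?] _] [[? ?] _] ?; lra.
  - have := mono _ _ h; have := hf k; have := hf l; rewrite hkl.
    rewrite /Z2set /= => -[[? ?] _] [[? ?] _] ?; lra.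
rewrite /Estar => hfin; apply: infinite_nat.
have : finite_set (f @` setT).
  apply: sub_finite_set hfin => _ [k _ <-]; split; last exact: (hf k).2.
  apply/eqP => h0; have := (hf k).1; rewrite h0 /Z2set /gnrm /nrm /gR /= normr0 maxxx => -[? ?].
  have := hM1 k; lra.
by rewrite (eq_finite_set (inj_card_eq _)) // => a b _ _; exact: finj.
Qed.
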